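(* Let $\mathfrak{G}$ be a non-redundant assembly graph. Then for every circuit $C$ of $\mathfrak{G}$ and every vertex $v$ of $\mathfrak{G}$, the number of occurrences of $v$ in $C$ equals the number of occurrences of $Label(v)$ in the cyclic string $Label(C)$.
   Context: All strings are over a fixed finite alphabet $\Sigma$. A cyclic string is a bi-infinite periodic word $\mathbb{Z}\to\Sigma$, considered up to shifting indices; its period is its least period $d\ge 1$. For a nonempty finite string $x$, $\langle x\rangle$ denotes the cyclic string obtained by repeating $x$ infinitely in both directions. A finite string $t$ is a substring of a cyclic string $c$ of period $d$ if it appears as a contiguous block of $c$; its number of occurrences in $c$ is the number of starting positions modulo $d$ at which it appears. A string $u$ is a proper infix of $w$ if $w=aub$ with $a,b$ nonempty. An abstract assembly graph is a finite directed multigraph in which each vertex and edge carries a label (a finite or cyclic string) such that for every edge $e$ from $u$ to $v$, $Label(u)$ is a prefix and $Label(v)$ is a suffix of $Label(e)$. An edge $e$ from $u$ to $v$ is a prefix edge if $Label(e)=Label(v)$ and a suffix edge if $Label(e)=Label(u)$. An assembly graph is an abstract assembly graph in which every vertex and edge lies on a directed cycle and no edge is both a prefix and a suffix edge. The label of a walk $v_0,e_1,v_1,\dots,e_n,v_n$ is $Label(e_1)$ followed, for $i=2,\dots,n$, by $Label(e_i)$ with its first $|Label(v_{i-1})|$ characters removed (consecutive edge labels overlap in the intermediate vertex label); a walk with no edges has the label of its vertex. A circuit is a closed walk ($v_n=v_0$), considered up to rotation and required to be primitive (not a repetition of a shorter closed walk); writing the walk label as $Label(v_0)\,x$, the label of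 the circuit is the cyclic string $\langle x\rangle$. The number of occurrences of a vertex $v$ in a circuit is the number of indices $i\in\{1,\dots,n\}$ with $v_i=v$. A walk $P$ is an inner subwalk of a walk $Q$ if $Q=APB$ for walks $A,B$ each containing at least one edge. An assembly graph is non-redundant if whenever $P,Q$ are walks with $Label(P)$ a proper infix of $Label(Q)$, $P$ occurs as an inner subwalk of $Q$. *)

(* Defs.v *)
From mathcomp Require Import all_boot.
Set Implicit Arguments. Unset Strict Implicit. Unset Printing Implicit Defensive.

Record lgraph (Sigma : finType) := LGraph {
  vertex : finType;
  edge : finType;
  src : edge -> vertex;
  tgt : edge -> vertex;
  vlabel : vertex -> seq Sigma;
  elabel : edge -> seq Sigma
}.

Section Graphs.
Variables (Sigma : finType) (G : lgraph Sigma).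

(* A walk v_0, e_1, v_1, ..., e_n, v_n is given by its start vertex v_0 and
   its edge list [e_1; ...; e_n]; it is valid when src e_1 = v_0 and
   src e_{i+1} = tgt e_i. *)
Fixpoint is_walk (v : vertex G) (es : seq (edge G)) : bool :=
  match es with
  | [::] => true
  | e :: es' => (src e == v) && is_walk (tgt e) es'
  end.

Definition walk_end (v : vertex G) (es : seq (edge G)) : vertex G :=
  last v (map (@tgt _ G) es).

Definition closed_walk (v : vertex G) (es : seq (edge G)) : bool :=
  is_walk v es && (walk_end v es == v).

Definition abstract_assembly_graph : Prop :=
  forall e : edge G, prefix (vlabel (src e)) (elabel e)
                     /\ suffix (vlabel (tgt e)) (elabel e).

Definition prefix_edge (e : edge G) : bool := elabel e == vlabel (tgt e).
Definition suffix_edge (e : edge G) : bool := elabel e == vlabel (src e).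

Definition directed_cycle (v : vertex G) (es : seq (edge G)) : bool :=
  [&& closed_walk v es, 0 < size es & uniq (map (@tgt _ G) es)].

Definition assembly_graph : Prop :=
  [/\ abstract_assembly_graph,
      (forall v : vertex G, exists v0 es,
          directed_cycle v0 es /\ v \in map (@tgt _ G) es),
      (forall e : edge G, exists v0 es, directed_cycle v0 es /\ e \in es)
    & (forall e : edge G, ~~ (prefix_edge e && suffix_edge e))].

Definition walk_label (v : vertex G) (es : seq (edge G)) : seq Sigma :=
  match es with
  | [::] => vlabel v
  | e :: es' => elabel e ++
      flatten [seq drop (size (vlabel (src f))) (elabel f) | f <- es']
  end.

Definition proper_infix (u w : seq Sigma) : Prop :=
  exists a b : seq Sigma, [/\ a != [::], b != [::] & w = a ++ u ++ b].

Definition inner_subwalk (p0 : vertex G) (pes : seq (edge G))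
    (q0 : vertex G) (qes : seq (edge G)) : Prop :=
  exists A B : seq (edge G),
    [/\ A != [::], B != [::], walk_end q0 A = p0 & qes = A ++ pes ++ B].

Definition non_redundant : Prop :=
  forall p0 pes q0 qes, is_walk p0 pes -> is_walk q0 qes ->
    proper_infix (walk_label p0 pes) (walk_label q0 qes) ->
    inner_subwalk p0 pes q0 qes.

Definition primitive_walk (es : seq (edge G)) : Prop :=
  forall (w : seq (edge G)) (m : nat), 1 < m -> es <> flatten (nseq m w).

(* A circuit (represented by any of its rotations): a primitive closed walk
   with at least one edge. *)
Definition circuit (v : vertex G) (es : seq (edge G)) : Prop :=
  [/\ closed_walk v es, 0 < size es & primitive_walk es].

(* Writing the walk label as Label(v_0) x, the circuit label is <x>;
   we return the finite word x. *)
Definition circuit_word (v : vertex G) (es : seq (edge G)) : seq Sigma :=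
  drop (size (vlabel v)) (walk_label v es).

(* number of indices i in {1..n} with v_i = v *)
Definition vertex_occurrences (u : vertex G) (es : seq (edge G)) : nat :=
  count (fun e => tgt e == u) es.

End Graphs.

Section Cyclic.
Variable Sigma : finType.

(* The cyclic string <x> as the periodic word i |-> x_(i mod |x|)
   (positions are taken in nat; the word is periodic so this loses nothing). *)
Definition cyc (x : seq Sigma) (i : nat) : option Sigma := onth x (i %% size x).

(* d is a period of <x>: c(i + d) = c(i) for all i (it suffices to check
   one full block of |x| positions since c has period |x|). *)
Definition is_periodb (x : seq Sigma) (d : nat) : bool :=
  all (fun i => cyc x (i + d) == cyc x i) (iota 0 (size x)).

(* least period d >= 1 of <x> (|x| is always a period) *)
Definition cperiod (x : seq Sigma) : nat :=
  (find (fun d => is_periodb x d.+1) (iota 0 (size x))).+1.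

Definition occurs_at (t x : seq Sigma) (i : nat) : bool :=
  all (fun j => cyc x (i + j) == onth t j) (iota 0 (size t)).

(* number of occurrences of t in <x>: starting positions modulo the period *)
Definition cyc_occurrences (t x : seq Sigma) : nat :=
  count (occurs_at t x) (iota 0 (cperiod x)).

End Cyclic.

(* Main.v *)
Require Import Defs.
From mathcomp Require Import all_boot zify.
Set Implicit Arguments. Unset Strict Implicit. Unset Printing Implicit Defensive.

Section Walks.
Variables (Sigma : finType) (G : lgraph Sigma).
Hypothesis habs : abstract_assembly_graph G.

Definition dseg (e : edge G) := drop (size (vlabel (src e))) (elabel e).
Definition WL (v : vertex G) (es : seq (edge G)) := vlabel v ++ flatten (map dseg es).

Lemma elabelE (e : edge G) : elabel e = vlabel (src e) ++ dseg e.
Proof. rewrite /dseg; have [/prefixP [s ->] _] := habs e. by rewrite drop_size_cat. Qed.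

Lemma tgt_suf (e : edge G) : exists y, elabel e = y ++ vlabel (tgt e).
Proof. have [_ /suffixP [s ->]] := habs e. by exists s. Qed.

Lemma walk_labelE (v : vertex G) es : is_walk v es -> walk_label v es = WL v es.
Proof.
case: es => [|e es] /=; first by rewrite /WL cats0.
by case/andP => /eqP <- _; rewrite /WL elabelE catA.
Qed.

Lemma is_walk_cat (v : vertex G) a b : is_walk v (a ++ b) = is_walk v a && is_walk (walk_end v a) b.
Proof. by elim: a v => [|e a IH] v //=; rewrite IH andbA. Qed.

Lemma walk_end_cat (v : vertex G) a b : walk_end v (a ++ b) = walk_end (walk_end v a) b.
Proof. by rewrite /walk_end map_cat last_cat. Qed.

Lemma WL_cat (v : vertex G) a b : WL v (a ++ b) = WL v a ++ flatten (map dseg b).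
Proof. by rewrite /WL map_cat flatten_cat catA. Qed.

Lemma WL_suf (v : vertex G) es : is_walk v es -> exists y, WL v es = y ++ vlabel (walk_end v es).
Proof.
elim/last_ind: es => [|es e IH]; first by exists [::]; rewrite /WL cats0.
rewrite -cats1 is_walk_cat => /andP [/IH [y Hy]] /= /andP [/eqP Hs _].
have [y' Hy'] := tgt_suf e.
exists (y ++ y'); rewrite WL_cat Hy /= cats0 -Hs walk_end_cat /=.
by rewrite -catA -elabelE Hy' catA.
Qed.

Lemma size_WL_ge (v : vertex G) es : size (vlabel v) <= size (WL v es).
Proof. by rewrite /WL size_cat leq_addr. Qed.


Hypothesis hps : forall e : edge G, ~~ (prefix_edge e && suffix_edge e).


Lemma exists_last (p : nat -> bool) m : p 0 ->
  exists i, [/\ i <= m, p i & forall k, i < k -> k <= m -> ~~ p k].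
Proof.
move=> p0; elim: m => [|m [i [him hpi hk]]]; first by exists 0; split => // k; lia.
case hm: (p m.+1).
  by exists m.+1; split => // k; lia.
exists i; split => //; first lia.
move=> k hik hkm; case: (ltngtP k m.+1) => [hk'||->]; last by rewrite hm.
  by apply: hk => //; lia.
  lia.
Qed.

Lemma exists_first (p : nat -> bool) m : p m ->
  exists j, [/\ j <= m, p j & forall k, k < j -> ~~ p k].
Proof.
move=> pm; exists (find p (iota 0 m.+1)).
have hh : has p (iota 0 m.+1) by apply/hasP; exists m => //; rewrite mem_iota; lia.
have hf := hh; rewrite has_find size_iota in hf.
split; first lia.
  by have := nth_find 0 hh; rewrite nth_iota ?add0n // size_iota.
move=> k hk; have := before_find 0 hk; rewrite nth_iota ?add0n; last lia.
by move=> ->.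
Qed.

Lemma three_split (T : Type) (w : seq T) a r t b : a <= r -> r <= t -> t <= b -> b <= size w ->
  drop a (take b w) = drop a (take r w) ++ drop r (take t w) ++ drop t (take b w).
Proof.
move=> h1 h2 h3 h4.
have E : take b w = take r w ++ drop r (take t w) ++ drop t (take b w).
  rewrite catA -{1}(cat_take_drop t (take b w)) take_takel //.
  by rewrite -{1}(cat_take_drop r (take t w)) take_takel.
rewrite {1}E drop_cat size_takel; last lia.
case: ltnP => h; first by [].
have -> : a = r by lia.
have -> : drop r (take r w) = [::] by apply: drop_oversize; rewrite size_take; case: ltnP => // ?; lia.
by rewrite subnn drop0.
Qed.

Lemma split3 (T : Type) (X A P B : seq T) k : take k X = A ++ P ++ B ->
  take (size A) X = A /\ take (size P) (drop (size A) X) = P.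
Proof.
move=> h; have hs := congr1 size h; rewrite size_cat size_cat in hs.
have hk : size A + size P <= k.
  by move: hs; rewrite size_take; case: ltnP; lia.
split.
  by rewrite -(take_takel _ (_ : size A <= k)) ?h ?take_size_cat //; lia.
rewrite take_drop addnC -(take_takel _ hk) h catA take_size_cat ?size_cat //.
by rewrite drop_size_cat.
Qed.

Section Pos.
Variables (q0 : vertex G) (Q : seq (edge G)).
Hypothesis hQ : is_walk q0 Q.

Definition vt i := walk_end q0 (take i Q).
Definition Ps i := size (WL q0 (take i Q)).
Definition st i := Ps i - size (vlabel (vt i)).
Definition W := WL q0 Q.

Lemma walk_take i : is_walk q0 (take i Q).
Proof. by move: hQ; rewrite -{1}(cat_take_drop i Q) is_walk_cat => /andP []. Qed.

Lemma walk_drop i : is_walk (vt i) (drop i Q).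
Proof. by move: hQ; rewrite -{1}(cat_take_drop i Q) is_walk_cat => /andP []. Qed.

Lemma lab_le i : size (vlabel (vt i)) <= Ps i.
Proof.
have [y Hy] := WL_suf (walk_take i).
by rewrite /Ps Hy size_cat leq_addl.
Qed.

Lemma take_split i j : i <= j -> take j Q = take i Q ++ take (j - i) (drop i Q).
Proof. by move=> hij; rewrite -takeD subnKC. Qed.

Lemma WL_split i j : i <= j ->
  WL q0 (take j Q) = WL q0 (take i Q) ++ flatten (map dseg (take (j - i) (drop i Q))).
Proof. by move=> hij; rewrite (take_split hij) WL_cat. Qed.

Lemma take_W j : take (Ps j) W = WL q0 (take j Q).
Proof. by rewrite /W -{1}(cat_take_drop j Q) WL_cat take_size_cat. Qed.

Lemma Ps_le_W j : Ps j <= size W.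
Proof. by rewrite /W -(cat_take_drop j Q) WL_cat size_cat leq_addr. Qed.

Lemma Ps_mono i j : i <= j -> Ps i <= Ps j.
Proof. by move=> hij; rewrite /Ps (WL_split hij) size_cat leq_addr. Qed.

Lemma vt_split i j : i <= j -> vt j = walk_end (vt i) (take (j - i) (drop i Q)).
Proof. by move=> hij; rewrite /vt (take_split hij) walk_end_cat. Qed.

Lemma st_mono i j : i <= j -> st i <= st j.
Proof.
move=> hij; have := WL_split hij; rewrite -/(Ps j) => HPs.
have hw : is_walk (vt i) (take (j - i) (drop i Q)).
  by move: (walk_drop i); rewrite -{1}(cat_take_drop (j - i) (drop i Q)) is_walk_cat => /andP [].
have [y Hy] := WL_suf hw; rewrite -(vt_split hij) in Hy.
have := congr1 size Hy; rewrite /WL !size_cat => H1.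
have := congr1 size HPs; rewrite size_cat -/(Ps i) => H2.
have := lab_le i; have := lab_le j; rewrite -/(Ps j) in H2; rewrite /st; lia.
Qed.

Lemma st0 : st 0 = 0.
Proof. by rewrite /st /Ps /vt take0 /WL /= cats0 subnn. Qed.

Lemma Ps_end : Ps (size Q) = size W.
Proof. by rewrite /Ps take_size. Qed.

Lemma PsE i : Ps i = st i + size (vlabel (vt i)).
Proof. by rewrite /st subnK // lab_le. Qed.

Lemma sub_label i j : i <= j ->
  WL (vt i) (take (j - i) (drop i Q)) = drop (st i) (take (Ps j) W).
Proof.
move=> hij; rewrite take_W (WL_split hij).
have [y Hy] := WL_suf (walk_take i); rewrite -/(vt i) in Hy.
have Hsy : size y = st i by rewrite /st /Ps Hy size_cat addnK.
by rewrite Hy -catA -Hsy drop_size_cat.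
Qed.

Lemma step i : i < size Q -> st i < st i.+1 \/ Ps i < Ps i.+1.
Proof.
move=> hi.
have [e [r Hd]] : exists e r, drop i Q = e :: r.
  case Hd: (drop i Q) => [|e r]; last by exists e, r.
  by move: (congr1 size Hd); rewrite size_drop /=; lia.
have Ht : take i.+1 Q = take i Q ++ [:: e] by rewrite (take_split (leqnSn i)) Hd subSnn /= take0.
have hs : src e = vt i by move: (walk_drop i); rewrite Hd /= => /andP [/eqP].
have Hv : vt i.+1 = tgt e by rewrite /vt Ht walk_end_cat.
have HP : Ps i.+1 = Ps i + size (dseg e) by rewrite /Ps Ht WL_cat size_cat /= cats0.
have H1 := PsE i; have H2 := PsE i.+1; rewrite Hv in H2.
have m1 := st_mono (leqnSn i); have m2 := Ps_mono (leqnSn i).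
case: (ltnP (st i) (st i.+1)) => hst; first by left.
case: (ltnP (Ps i) (Ps i.+1)) => hPs; first by right.
exfalso.
have hd : size (dseg e) = 0 by lia.
have he : elabel e = vlabel (src e).
  by rewrite elabelE; move/eqP: hd; rewrite size_eq0 => /eqP ->; rewrite cats0.
have [y Hy] := tgt_suf e.
have hy : y = [::].
  apply: size0nil; move: (congr1 size Hy); rewrite he size_cat hs; lia.
move: (hps e); rewrite /prefix_edge /suffix_edge.
have -> : elabel e == vlabel (tgt e) by rewrite Hy hy.
by rewrite he eqxx.
Qed.

Lemma strict i j : i < j -> j <= size Q -> st i < st j \/ Ps i < Ps j.
Proof.
move=> hij hj.
have hi : i < size Q by lia.
have [h|h] := step hi.
  by left; apply: (leq_trans h); apply: st_mono.
by right; apply: (leq_trans h); apply: Ps_mono.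
Qed.

Hypothesis hnr : non_redundant G.

Lemma st_le_Ps i : st i <= Ps i.
Proof. by rewrite /st leq_subr. Qed.

Lemma align (p0 : vertex G) P r : is_walk p0 P -> 0 < r ->
  r + size (WL p0 P) < size W ->
  take (size (WL p0 P)) (drop r W) = WL p0 P ->
  exists c, [/\ c + size P <= size Q, take (size P) (drop c Q) = P, vt c = p0 & st c = r].
Proof.
move=> hP hr ht hocc.
move: ht hocc; move Hu: (WL p0 P) => u ht hocc.
have [t Ht] : exists t, t = r + size u by eexists.
have h0 : st 0 < r by rewrite st0.
have [i [him hi hk]] := @exists_last (fun k => st k < r) (size Q) h0.
have hm : t < Ps (size Q) by rewrite Ps_end Ht.
have [j [hjm hj hk']] := @exists_first (fun k => t < Ps k) (size Q) hm.
have hWu : drop r (take t W) = u.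
  by rewrite -hocc take_drop Ht addnC.
have hinf : forall a b, a < r -> t < b -> b <= size W ->
    proper_infix u (drop a (take b W)).
  move=> a b ha hb hbW.
  have hrW : r <= size W by apply: leq_trans (ltnW ht); apply: leq_addr.
  exists (drop a (take r W)), (drop t (take b W)); split.
  - by rewrite -size_eq0 size_drop size_takel; [rewrite -lt0n; lia | exact: hrW].
  - by rewrite -size_eq0 size_drop size_takel; [rewrite -lt0n; lia | exact: hbW].
  - by rewrite -hWu; apply: three_split => //; lia.
case: (ltnP i j) => hij; last first.
  exfalso.
  have hPi : t < Ps i by apply: (leq_trans hj); apply: Ps_mono.
  have := sub_label (leqnn i); rewrite subnn take0 => hL.
  have := hinf _ _ hi hPi (Ps_le_W i); rewrite -hL.
  rewrite -(walk_labelE (v:=vt i) (es:=[::])) // -Hu -(walk_labelE hP) => hpi.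
  have [A [B [hA _ _ hAB]]] := hnr hP (isT : is_walk (vt i) [::]) hpi.
  by move: hAB hA; case: A.
have hR : is_walk (vt i) (take (j - i) (drop i Q)).
  by move: (walk_drop i); rewrite -{1}(cat_take_drop (j - i) (drop i Q)) is_walk_cat => /andP [].
have := hinf _ _ hi hj (Ps_le_W j); rewrite -(sub_label (ltnW hij)).
rewrite -(walk_labelE hR) -Hu -(walk_labelE hP) => hpi.
have [A [B [hA hB hend hAB]]] := hnr hP hR hpi.
have [hTA hTP] := split3 hAB.
have hsz := congr1 size hAB; rewrite !size_cat size_take size_drop in hsz.
have hsA : 0 < size A by rewrite lt0n size_eq0.
have hsB : 0 < size B by rewrite lt0n size_eq0.
have hsz' : size A + (size P + size B) = j - i.
  move: hsz hjm hij; move: (size A) (size P) (size B) (size Q) => a1 a2 a3 a4.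
  by case: (ltnP (j - i) (a4 - i)) => ? /=; lia.
exists (i + size A).
have hc1 : i + size A + size P <= size Q by lia.
have hTP' : take (size P) (drop (i + size A) Q) = P by rewrite addnC -drop_drop.
have hvc : vt (i + size A) = p0.
  by rewrite (vt_split (leq_addr (size A) i)) addKn hTA.
split => //.
set c := i + size A.
have hcs : r <= st c.
  have : ~~ (st c < r) by apply: hk; rewrite /c; lia.
  by rewrite -leqNgt.
have hes : ~~ (t < Ps (c + size P)) by apply: hk'; rewrite /c; lia.
rewrite -leqNgt in hes.
have hsl := sub_label (leq_addr (size P) c).
rewrite addKn hTP' hvc Hu in hsl.
have hsu := congr1 size hsl.
rewrite size_drop size_takel in hsu; last by apply: Ps_le_W.
have := st_le_Ps c; have := Ps_mono (leq_addr (size P) c).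
lia.
Qed.

End Pos.
End Walks.

Lemma per_mul (T : Type) (f : nat -> T) p : (forall i, f (i + p) = f i) ->
  forall k i, f (i + k * p) = f i.
Proof. move=> hp; elim=> [|k IH] i; first by rewrite addn0. by rewrite mulSn addnA IH hp. Qed.

Lemma per_gcd (T : Type) (f : nat -> T) a b : 0 < a ->
  (forall i, f (i + a) = f i) -> (forall i, f (i + b) = f i) ->
  forall i, f (i + gcdn a b) = f i.
Proof.
move=> ha hpa hpb i.
have [u _ /dvdnP [c hc]] := Bezoutl b ha.
by rewrite -(per_mul hpb u) -addnA hc (per_mul hpa).
Qed.

Lemma onth_take (T : Type) (s : seq T) n i :
  onth (take n s) i = if i < n then onth s i else None.
Proof.
elim: s n i => [|x s IH] [|n] [|i] //=; try by case: ifP.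
by rewrite IH.
Qed.

Lemma onth_drop (T : Type) (s : seq T) n i : onth (drop n s) i = onth s (n + i).
Proof. by elim: s n => [|x s IH] [|n] //=; rewrite onth0n. Qed.

Lemma power_of (T : Type) g m (s : seq T) : size s = m * g ->
  (forall i, i + g < size s -> onth s (i + g) = onth s i) ->
  s = flatten (nseq m (take g s)).
Proof.
elim: m s => [|m IH] s hs hp; first by apply: size0nil.
rewrite /= -{1}(cat_take_drop g s); congr (_ ++ _).
have hd : size (drop g s) = m * g by rewrite size_drop hs mulSn; lia.
have hp' : forall i, i + g < size (drop g s) -> onth (drop g s) (i + g) = onth (drop g s) i.
  move=> i; rewrite size_drop => hi; rewrite !onth_drop addnA hp //; lia.
rewrite (IH (drop g s) hd hp').
move: hd hs hp; case: m {IH hp'} => [|m] hd hs hp //.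
congr (flatten (nseq _ _)); apply: eq_from_onth => i.
rewrite !onth_take; case: ltnP => // hi.
by rewrite onth_drop addnC hp //; rewrite hs; lia.
Qed.

Section Cyc.
Variable Sigma : finType.
Implicit Types x t : seq Sigma.

Lemma cyc_mod x i : cyc x (i %% size x) = cyc x i.
Proof. by rewrite /cyc modn_mod. Qed.

Lemma cyc_per_n x i : cyc x (i + size x) = cyc x i.
Proof. by rewrite /cyc modnDr. Qed.

Lemma per_of_b x d : is_periodb x d -> forall i, cyc x (i + d) = cyc x i.
Proof.
move=> /allP hb i.
case: (posnP (size x)) => hn.
  by rewrite /cyc hn !modn0; move/eqP: hn; rewrite size_eq0 => /eqP ->; rewrite !onth0n.
rewrite -cyc_mod -modnDml cyc_mod.
have := hb (i %% size x); rewrite mem_iota add0n ltn_mod hn => /(_ isT) /eqP ->.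
by rewrite cyc_mod.
Qed.

Lemma b_of_per x d : (forall i, cyc x (i + d) = cyc x i) -> is_periodb x d.
Proof. by move=> h; apply/allP => i _; rewrite h. Qed.

Lemma cperiod_props x : 0 < size x ->
  [/\ 0 < cperiod x, cperiod x <= size x,
      (forall i, cyc x (i + cperiod x) = cyc x i) & cperiod x %| size x].
Proof.
move=> hn.
set p := fun d => is_periodb x d.+1.
have hh : has p (iota 0 (size x)).
  apply/hasP; exists (size x).-1; first by rewrite mem_iota; lia.
  by rewrite /p prednK //; apply: b_of_per => i; apply: cyc_per_n.
have hf := hh; rewrite has_find size_iota in hf.
have hpd : is_periodb x (cperiod x).
  by have := nth_find 0 hh; rewrite nth_iota // add0n.
have hper := per_of_b hpd.
have hle : cperiod x <= size x by rewrite /cperiod -/p.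
split => //.
set d := cperiod x in hper hpd *.
have hg := per_gcd (isT : 0 < d) hper (@cyc_per_n x).
have hg0 : 0 < gcdn d (size x) by rewrite gcdn_gt0.
have hgd : gcdn d (size x) <= d by apply: dvdn_leq => //; apply: dvdn_gcdl.
case: (ltngtP (gcdn d (size x)) d) => hc; last by rewrite -hc dvdn_gcdr.
  exfalso.
  have hb := b_of_per hg.
  have hd : d = (find p (iota 0 (size x))).+1 by [].
  have : (gcdn d (size x)).-1 < find p (iota 0 (size x)) by move: hd hc hg0; clearbody d p; move: (gcdn d (size x)) => gg; lia.
  move/(before_find 0); rewrite nth_iota; last lia.
  by rewrite /p add0n prednK // hb.
lia.
Qed.

Lemma occurs_at_shift t x s k d : (forall i, cyc x (i + d) = cyc x i) ->
  occurs_at t x (s + k * d) = occurs_at t x s.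
Proof.
move=> hp; apply: eq_all => j /=.
by rewrite addnAC per_mul.
Qed.

End Cyc.

Lemma onth_rep (T : Type) (s : seq T) K i : i < K * size s ->
  onth (flatten (nseq K s)) i = onth s (i %% size s).
Proof.
elim: K i => [|K IH] i hi; first by rewrite mul0n in hi.
rewrite /= onth_cat; case: ltnP => h; first by rewrite modn_small.
rewrite IH; last by rewrite mulSn in hi; lia.
by rewrite -{2}(subnK h) modnDr.
Qed.

Lemma flatten_rep_r (T : Type) (s : seq T) K : flatten (nseq K.+1 s) = flatten (nseq K s) ++ s.
Proof.
elim: K => [|K IH]; first by rewrite /= cats0.
have -> : flatten (nseq K.+2 s) = s ++ flatten (nseq K.+1 s) by [].
by rewrite {1}IH catA.
Qed.

Lemma size_rep (T : Type) (s : seq T) K : size (flatten (nseq K s)) = K * size s.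
Proof. by elim: K => [|K IH] //=; rewrite size_cat IH mulSn. Qed.

Section Rep.
Variables (Sigma : finType) (G : lgraph Sigma).

Lemma rep_walk (v0 : vertex G) es K : closed_walk v0 es -> is_walk v0 (flatten (nseq K es)).
Proof.
case/andP => hw /eqP he; elim: K => [|K IH] //=.
by rewrite is_walk_cat hw he IH.
Qed.

Lemma map_dseg_rep (es : seq (edge G)) K :
  flatten (map (@dseg _ G) (flatten (nseq K es))) = flatten (nseq K (flatten (map (@dseg _ G) es))).
Proof. by elim: K => [|K IH] //=; rewrite map_cat flatten_cat IH. Qed.

Lemma take_rep (T : Type) (es : seq T) K i : i <= K * size es ->
  take (i + size es) (flatten (nseq K.+1 es)) = es ++ take i (flatten (nseq K.+1 es)).
Proof.
move=> hi.
have E : flatten (nseq K.+1 es) = es ++ flatten (nseq K es) by [].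
rewrite {1}E take_cat; case: ltnP => h; first lia.
rewrite addnK; congr (_ ++ _).
rewrite flatten_rep_r take_cat size_rep; case: ltnP => h2 //.
have -> : i = K * size es by lia.
by rewrite subnn take0 cats0 take_oversize // size_rep.
Qed.


Hypothesis habs : abstract_assembly_graph G.
Hypothesis hps : forall e : edge G, ~~ (prefix_edge e && suffix_edge e).

Section Circ.
Variables (v0 : vertex G) (es : seq (edge G)) (K : nat).
Hypothesis hcw : closed_walk v0 es.
Hypothesis hn : 0 < size es.
Hypothesis hK : 0 < K.

Definition Qr := flatten (nseq K es).
Definition xw := flatten (map (@dseg _ G) es).
Definition ll := size (vlabel v0).

Lemma hQ : is_walk v0 Qr.
Proof. exact: rep_walk. Qed.

Lemma size_Qr : size Qr = K * size es.
Proof. exact: size_rep. Qed.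

Lemma hes_end : walk_end v0 es = v0.
Proof. by case/andP: hcw => _ /eqP. Qed.

Lemma hes_walk : is_walk v0 es.
Proof. by case/andP: hcw. Qed.

Lemma per_step i : i + size es <= K * size es ->
  [/\ vt v0 Qr (i + size es) = vt v0 Qr i,
      Ps v0 Qr (i + size es) = Ps v0 Qr i + size xw &
      st v0 Qr (i + size es) = st v0 Qr i + size xw].
Proof.
move=> hi.
have [K' hK'] : exists K', K = K'.+1 by exists K.-1; lia.
have hi' : i <= K' * size es by move: hi; rewrite hK' mulSn; lia.
have ht : take (i + size es) Qr = es ++ take i Qr by rewrite /Qr hK' take_rep.
have hv : vt v0 Qr (i + size es) = vt v0 Qr i by rewrite /vt ht walk_end_cat hes_end.
have hP : Ps v0 Qr (i + size es) = Ps v0 Qr i + size xw.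
  rewrite /Ps ht WL_cat /WL /xw !size_cat; lia.
split => //.
have h1 := PsE habs hQ i; have h2 := PsE habs hQ (i + size es).
rewrite hv in h2; lia.
Qed.

Lemma per_iter q i : i + q * size es <= K * size es ->
  [/\ vt v0 Qr (i + q * size es) = vt v0 Qr i,
      Ps v0 Qr (i + q * size es) = Ps v0 Qr i + q * size xw &
      st v0 Qr (i + q * size es) = st v0 Qr i + q * size xw].
Proof.
elim: q => [|q IH] hi; first by rewrite !mul0n !addn0.
have [h1 h2 h3] : [/\ vt v0 Qr (i + q * size es) = vt v0 Qr i,
      Ps v0 Qr (i + q * size es) = Ps v0 Qr i + q * size xw &
      st v0 Qr (i + q * size es) = st v0 Qr i + q * size xw].
  by apply: IH; move: hi; rewrite mulSn; lia.
have e : i + q.+1 * size es = (i + q * size es) + size es by rewrite mulSn; lia.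
rewrite e in hi *.
have [g1 g2 g3] := per_step hi.
rewrite g1 g2 g3 h1 h2 h3 mulSn; split => //; lia.
Qed.

Lemma x_pos : 0 < size xw.
Proof.
have := strict habs hps hes_walk hn (leqnn (size es)).
have e1 : Ps v0 es (size es) = ll + size xw by rewrite /Ps take_size /WL size_cat.
have e2 : Ps v0 es 0 = ll by rewrite /Ps take0 /WL cats0.
have e3 : st v0 es (size es) = size xw by rewrite /st e1 /vt take_size hes_end /ll; lia.
rewrite st0 e1 e2 e3; lia.
Qed.

Lemma W_eq : W v0 Qr = vlabel v0 ++ flatten (nseq K xw).
Proof. by rewrite /W /WL /Qr map_dseg_rep. Qed.

Lemma size_W : size (W v0 Qr) = ll + K * size xw.
Proof. by rewrite W_eq size_cat size_rep. Qed.

Lemma W_cyc r : r < size (W v0 Qr) -> onth (W v0 Qr) r = cyc xw (r + ll * size xw - ll).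
Proof.
have hx := x_pos.
have hN : ll <= ll * size xw by rewrite leq_pmulr.
suff H : forall k r, ll - r <= k -> r < size (W v0 Qr) ->
    onth (W v0 Qr) r = cyc xw (r + ll * size xw - ll) by apply: H.
elim=> [|k IH] {}r hk hr.
  rewrite W_eq onth_cat /ll -/ll ifN; last by rewrite -leqNgt; lia.
  rewrite onth_rep; last by move: hr; rewrite size_W; lia.
  rewrite /cyc; congr onth.
  have -> : r + ll * size xw - ll = ll * size xw + (r - ll) by lia.
  by rewrite modnMDl.
case: (leqP ll r) => hlr.
  by apply: IH => //; lia.
have [y Hy] := WL_suf habs hes_walk; rewrite hes_end in Hy.
have hsy : size y = size xw.
  by move: (congr1 size Hy); rewrite /WL size_cat size_cat -/xw; lia.
have hW : W v0 Qr = (vlabel v0 ++ xw) ++ flatten (nseq K.-1 xw).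
  by rewrite W_eq -catA; case: (K) hK.
have e1 : onth (W v0 Qr) r = onth (W v0 Qr) (r + size xw).
  have hL : forall j, j < ll + size xw -> onth (W v0 Qr) j = onth (vlabel v0 ++ xw) j.
    by move=> j hj; rewrite hW onth_cat size_cat ifT.
  rewrite hL; last lia. rewrite hL; last lia.
  rewrite onth_cat ifT; last done.
  have -> : vlabel v0 ++ xw = y ++ vlabel v0 by rewrite -Hy.
  rewrite onth_cat hsy ifN; last by rewrite -leqNgt; lia.
  by rewrite addnK.
rewrite e1 IH; first last.
- rewrite size_W; have : K * size xw >= size xw by rewrite leq_pmull.
  lia.
- lia.
have -> : r + size xw + ll * size xw - ll = (r + ll * size xw - ll) + size xw by lia.
by rewrite cyc_per_n.
Qed.

End Circ.
End Rep.

Lemma shift_all (T : Type) (f : nat -> T) n a dl : 0 < n -> (forall i, f (i + n) = f i) ->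
  (forall j, j < n -> f (a + j + dl) = f (a + j)) -> forall i, f (i + dl) = f i.
Proof.
move=> hn hp hj.
have hp' := per_mul hp.
have hj' : forall j, f (a + j + dl) = f (a + j).
  move=> j; rewrite (divn_eq j n).
  have -> : a + (j %/ n * n + j %% n) + dl = (a + j %% n + dl) + j %/ n * n by lia.
  have -> : a + (j %/ n * n + j %% n) = (a + j %% n) + j %/ n * n by lia.
  by rewrite !hp' hj // ltn_mod.
move=> i.
have ha : a <= a * n by rewrite leq_pmulr.
rewrite -(hp' a i) -(hp' a (i + dl)).
have -> : i + a * n = a + (i + a * n - a) by lia.
have -> : i + dl + a * n = a + (i + a * n - a) + dl by lia.
by rewrite hj'.
Qed.

Lemma count_iota (T : Type) (x0 : T) (p : pred T) s :
  count p s = count (fun k => p (nth x0 s k)) (iota 0 (size s)).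
Proof. by rewrite -{1}(mkseq_nth x0 s) /mkseq count_map. Qed.

Lemma count_bij (A B : pred nat) n d (phi : nat -> nat) :
  (forall k k', k < n -> k' < n -> A k -> A k' -> phi k = phi k' -> k = k') ->
  (forall k, k < n -> A k -> phi k < d /\ B (phi k)) ->
  (forall s, s < d -> B s -> exists k, [/\ k < n, A k & phi k = s]) ->
  count A (iota 0 n) = count B (iota 0 d).
Proof.
move=> hinj hfw hbw.
rewrite -!size_filter -(size_map phi).
apply: perm_size; apply: uniq_perm.
- rewrite map_inj_in_uniq ?filter_uniq ?iota_uniq //.
  move=> k k'; rewrite !mem_filter !mem_iota !add0n => /andP [hA hk] /andP [hA' hk'].
  exact: hinj.
- by rewrite filter_uniq ?iota_uniq.
move=> s; rewrite mem_filter mem_iota add0n.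
apply/mapP/idP.
  move=> [k]; rewrite mem_filter mem_iota add0n => /andP [hA hk] ->.
  by have [h1 h2] := hfw k hk hA; rewrite h2 h1.
move=> /andP [hB hs]; have [k [hk hA <-]] := hbw s hs hB.
by exists k => //; rewrite mem_filter mem_iota add0n hA hk.
Qed.

Lemma vt_succ (Sigma : finType) (G : lgraph Sigma) (q0 : vertex G) Q e0 k : k < size Q ->
  vt q0 Q k.+1 = tgt (nth e0 Q k).
Proof. by move=> hk; rewrite /vt (take_nth e0 hk) /walk_end map_rcons last_rcons. Qed.

Section Main.
Variables (Sigma : finType) (G : lgraph Sigma).
Hypothesis habs : abstract_assembly_graph G.
Hypothesis hps : forall e : edge G, ~~ (prefix_edge e && suffix_edge e).
Hypothesis hnr : non_redundant G.
Variables (v0 : vertex G) (es : seq (edge G)) (v : vertex G).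
Hypothesis hcw : closed_walk v0 es.
Hypothesis hn : 0 < size es.
Hypothesis hprim : primitive_walk es.

Definition KK := ll v0 + size (vlabel v) + 6.
Lemma hK : 0 < KK. Proof. by rewrite /KK addn_gt0 orbT. Qed.
Definition QQ := Qr es KK.
Definition xx := xw es.
Definition NN := ll v0 * size xx.
Definition dd := cperiod xx.
Definition phi k := (st v0 QQ k.+1 + NN - ll v0) %% dd.

Lemma hQQ : is_walk v0 QQ. Proof. exact: hQ. Qed.
Lemma hxp : 0 < size xx. Proof. exact: (x_pos habs hps hcw hn hK). Qed.
Lemma hdp : [/\ 0 < dd, dd <= size xx, (forall i, cyc xx (i + dd) = cyc xx i) & dd %| size xx].
Proof. exact: cperiod_props hxp. Qed.
Lemma hNl : ll v0 <= NN. Proof. by rewrite /NN leq_pmulr // hxp. Qed.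
Lemma sizeW : size (W v0 QQ) = ll v0 + KK * size xx.
Proof. exact: size_W. Qed.
Lemma Wcyc r : r < size (W v0 QQ) -> onth (W v0 QQ) r = cyc xx (r + NN - ll v0).
Proof. exact: (W_cyc habs hps hcw hn hK). Qed.

Lemma occ_W a t : a + size t <= size (W v0 QQ) -> take (size t) (drop a (W v0 QQ)) = t ->
  occurs_at t xx (a + NN - ll v0).
Proof.
move=> ha ht; apply/allP => j; rewrite mem_iota add0n leq0n /= => hj.
have := congr1 (fun s => onth s j) ht; rewrite /= onth_take hj onth_drop => <-.
have hN := hNl.
rewrite Wcyc; last by move: ha hj; move: (size t) (size (W v0 QQ)) => a1 a2; lia.
by apply/eqP; congr cyc; lia.
Qed.

Lemma W_occ a t : a + size t <= size (W v0 QQ) -> occurs_at t xx (a + NN - ll v0) ->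
  take (size t) (drop a (W v0 QQ)) = t.
Proof.
move=> ha /allP ho; apply: eq_from_onth => j.
rewrite onth_take onth_drop; case: ltnP => hj; last by rewrite onth_default.
have := ho j; rewrite mem_iota add0n leq0n hj => /(_ isT) /eqP <-.
have hN := hNl.
rewrite Wcyc; last by move: ha hj; move: (size t) (size (W v0 QQ)) => a1 a2; lia.
by congr cyc; lia.
Qed.

Lemma fw k : k < size es -> vt v0 QQ k.+1 = v -> phi k < dd /\ occurs_at (vlabel v) xx (phi k).
Proof.
move=> hk hv.
have [hd0 _ hper _] := hdp.
split; first by rewrite /phi ltn_mod.
have hs := sub_label habs hQQ (leqnn k.+1).
rewrite subnn take0 hv /WL /= cats0 in hs.
have hP := PsE habs hQQ k.+1; rewrite hv in hP.
have hle := Ps_le_W v0 QQ k.+1.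
have ho : occurs_at (vlabel v) xx (st v0 QQ k.+1 + NN - ll v0).
  apply: occ_W; first by rewrite -hP.
  by rewrite take_drop addnC -hP hs.
rewrite /phi; move: ho; set Y := st v0 QQ k.+1 + NN - ll v0.
by rewrite {1}(divn_eq Y dd) addnC occurs_at_shift.
Qed.


Lemma bw s : s < dd -> occurs_at (vlabel v) xx s ->
  exists k, [/\ k < size es, vt v0 QQ k.+1 = v & phi k = s].
Proof.
move=> hs hocc.
have [hd0 hdle hper hdvd] := hdp.
have hx := hxp.
set X := size xx in hx hdle hdvd.
set r := ll v0 + X + s.
have hKX : KK * X = (ll v0 + size (vlabel v) + 6) * X by [].
have hKX2 : (ll v0 + size (vlabel v) + 6) * X >= ll v0 + size (vlabel v) + 6 * X.
  rewrite !mulnDl; apply: leq_add; last by [].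
  by apply: leq_add; rewrite leq_pmulr.
have hsz : r + size (vlabel v) < size (W v0 QQ).
  rewrite sizeW -/X hKX /r; move: hKX2; move: ((ll v0 + size (vlabel v) + 6) * X) => a1; lia.
have hN := hNl.
have ho : occurs_at (vlabel v) xx (r + NN - ll v0).
  have -> : r + NN - ll v0 = s + (ll v0).+1 * X by rewrite /r /NN -/X mulSn; lia.
  by rewrite occurs_at_shift // => i; apply: cyc_per_n.
have ht := W_occ (ltnW hsz) ho.
have hWL : WL v [::] = vlabel v by rewrite /WL cats0.
have hr0 : 0 < r by rewrite /r; lia.
have := align habs hQQ hnr (p0 := v) (P := [::]) isT hr0.
rewrite hWL => /(_ hsz ht) [c [hc1 _ hvc hsc]].
have hc0 : 0 < c.
  case: c hc1 hvc hsc => [|c] //; rewrite st0 => _ _ h; by move: hr0; rewrite -h.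
have hcQ : c <= KK * size es by move: hc1; rewrite addn0 /QQ size_Qr.
set k := c.-1 %% size es; set q := c.-1 %/ size es.
have hck : c = k.+1 + q * size es by rewrite /k /q addSn addnC -divn_eq; lia.
have hle : k.+1 + q * size es <= KK * size es by rewrite -hck.
have [h1 _ h3] := per_iter habs hcw hn hK hle.
exists k; split; first by rewrite /k ltn_mod.
  by rewrite -h1 -hck.
rewrite -/QQ -/xx -/X -hck hsc in h3.
have hq : q <= (ll v0).+1.
  case: (leqP q (ll v0).+1) => // hq; exfalso.
  have : (ll v0).+2 * X <= q * X by rewrite leq_mul2r hq orbT.
  rewrite !mulSn; have : ll v0 <= ll v0 * X by rewrite leq_pmulr.
  move: h3; rewrite /r; move: (st v0 QQ k.+1) (q * X) (ll v0 * X) => a1 a2 a3; lia.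
have [m hm] := dvdnP hdvd.
have E : st v0 QQ k.+1 + NN - ll v0 = ((ll v0).+1 - q) * m * dd + s.
  rewrite -mulnA -hm /NN -/X.
  have : ((ll v0).+1 - q) * X + q * X = X + ll v0 * X by rewrite -mulnDl subnK // mulSn.
  move: h3 hN; rewrite /r /NN -/X; move: (st v0 QQ k.+1) (q * X) (ll v0 * X) (((ll v0).+1 - q) * X) => a1 a2 a3 a4.
  lia.
by rewrite /phi E modnMDl modn_small.
Qed.


Lemma inj_aux k k' : k < k' -> k' < size es -> vt v0 QQ k.+1 = v -> vt v0 QQ k'.+1 = v ->
  phi k = phi k' -> False.
Proof.
move=> hkk hk' hv hv' hphi.
have [hd0 hdle hper hdvd] := hdp.
have hx := hxp.
have hN := hNl.
set X := size xx in hx hdle hdvd.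
have hn' := hn.
set n := size es in hkk hk' hn'.
have hKn : 6 * n <= KK * n by rewrite leq_mul2r /KK; apply/orP; right; lia.
have hKX : KK * X >= ll v0 + 6 * X.
  rewrite /KK !mulnDl -addnA; apply: leq_add; first by rewrite leq_pmulr.
  by apply: leq_addl.
have hsQ : size QQ = KK * n by rewrite /QQ size_Qr.
set a := k.+1 + 1 * n; set b := k'.+1 + 1 * n.
have hla : a <= KK * n by rewrite /a; lia.
have hlb : b <= KK * n by rewrite /b; lia.
have [va _ sa] := per_iter habs hcw hn hK hla.
have [vb _ sb] := per_iter habs hcw hn hK hlb.
rewrite -/QQ -/xx -/X -/a hv in va sa.
rewrite -/QQ -/xx -/X -/b hv' in vb sb.
have h2n : 0 + 2 * n <= KK * n by lia.
have h3n : 0 + 3 * n <= KK * n by lia.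
have [_ P2 _] := per_iter habs hcw hn hK h2n.
have [_ P3 _] := per_iter habs hcw hn hK h3n.
have P0 : Ps v0 QQ 0 = ll v0 by rewrite /Ps take0 /WL cats0.
rewrite -/QQ -/xx -/X P0 add0n in P2 P3.
have hPb : Ps v0 QQ b <= ll v0 + 2 * X.
  by rewrite -P2; apply: Ps_mono; rewrite /b; lia.
have hPa : Ps v0 QQ (a + n) <= ll v0 + 3 * X.
  by rewrite -P3; apply: Ps_mono; rewrite /a; lia.
have hstb := st_le_Ps v0 QQ b.
set P := take n (drop a QQ).
have hPw : is_walk (vt v0 QQ a) P.
  move: (walk_drop hQQ a); rewrite -{1}(cat_take_drop n (drop a QQ)) is_walk_cat.
  by case/andP.
have hu := sub_label habs hQQ (leq_addr n a); rewrite addKn -/P in hu.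
have hPW := Ps_le_W v0 QQ (a + n).
have hsta : st v0 QQ a <= Ps v0 QQ (a + n).
  by apply: leq_trans (st_le_Ps _ _ _) _; apply: Ps_mono; lia.
have hsu : size (WL (vt v0 QQ a) P) = Ps v0 QQ (a + n) - st v0 QQ a.
  by rewrite hu size_drop size_takel.

have hdl : dd %| st v0 QQ k'.+1 - st v0 QQ k.+1.
  have h1 : st v0 QQ k.+1 <= st v0 QQ k'.+1 by apply: (st_mono habs hQQ); lia.
  move: hphi; rewrite /phi => /eqP; rewrite eq_sym eqn_mod_dvd; last by lia.
  by have -> : st v0 QQ k'.+1 + NN - ll v0 - (st v0 QQ k.+1 + NN - ll v0) = st v0 QQ k'.+1 - st v0 QQ k.+1 by lia.
have [t ht] := dvdnP hdl.
have hmono : st v0 QQ k.+1 <= st v0 QQ k'.+1 by apply: (st_mono habs hQQ); lia.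
have hrb : st v0 QQ b = st v0 QQ a + t * dd by rewrite sb sa -ht; lia.
have hW := sizeW; rewrite -/X in hW.
have hsz : st v0 QQ b + size (WL (vt v0 QQ a) P) < size (W v0 QQ).
  rewrite hsu hW; move: hKX hPb hPa hstb; move: (KK * X) => a1; lia.
have hr0 : 0 < st v0 QQ b by rewrite sb; lia.
have hocc : take (size (WL (vt v0 QQ a) P)) (drop (st v0 QQ b) (W v0 QQ)) = WL (vt v0 QQ a) P.
  apply: eq_from_onth => j.
  rewrite onth_take onth_drop; case: ltnP => hj; last by rewrite onth_default.
  rewrite hu onth_drop onth_take ifT; last by move: hj; rewrite hsu; lia.
  rewrite !Wcyc; first last.
  - move: hj hPW; rewrite hsu; lia.
  - move: hj hsz; move: (size (WL (vt v0 QQ a) P)) => a1; lia.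
  rewrite hrb.
  have -> : st v0 QQ a + t * dd + j + NN - ll v0 = (st v0 QQ a + j + NN - ll v0) + t * dd by lia.
  by rewrite (per_mul hper).
have [c [hc1 hcP hvc hsc]] := align habs hQQ hnr hPw hr0 hsz hocc.
have hPc : Ps v0 QQ c = Ps v0 QQ b.
  by rewrite (PsE habs hQQ c) (PsE habs hQQ b) hvc hsc va vb.
have hcb : c = b.
  have hbQ : b <= size QQ by rewrite hsQ.
  have hcQ : c <= size QQ by move: hc1; lia.
  case: (ltngtP c b) => // h; exfalso.
    by case: (strict habs hps hQQ h hbQ) => H; move: H; rewrite ?hsc ?hPc ltnn.
  by case: (strict habs hps hQQ h hcQ) => H; move: H; rewrite ?hsc ?hPc ltnn.
rewrite hcb in hcP.
have hsP : size P = n by rewrite /P size_takel // size_drop hsQ; rewrite /a; lia.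
have honQ : forall i, i < KK * n -> onth QQ i = onth es (i %% n).
  by move=> i hi; rewrite /QQ /Qr onth_rep.
pose f i := onth es (i %% n).
have hfa : forall j, j < n -> f (a + j + (k' - k)) = f (a + j).
  move=> j hj.
  have -> : a + j + (k' - k) = b + j by rewrite /a /b; lia.
  rewrite /f -!honQ; try (rewrite /a /b; lia).
  have H : onth (take (size P) (drop b QQ)) j = onth P j by rewrite hcP.
  rewrite onth_take hsP hj onth_drop in H; rewrite H.
  by rewrite /P onth_take hj onth_drop.
have hfn : forall i, f (i + n) = f i by move=> i; rewrite /f modnDr.
have hfd := shift_all hn' hfn hfa.
have hdk : 0 < k' - k by lia.
have hfg := per_gcd hdk hfd hfn.
set g := gcdn (k' - k) n in hfg.
have hg0 : 0 < g by rewrite /g gcdn_gt0 hdk.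
have hgn : g %| n by apply: dvdn_gcdr.
have hgl : g < n by apply: (@leq_ltn_trans (k' - k)); [apply: dvdn_leq => //; apply: dvdn_gcdl | lia].
have hpow := @power_of _ g (n %/ g) es (esym (divnK hgn)).
have hm : 1 < n %/ g.
  move: (divnK hgn); case: (n %/ g) => [|[|m]] //=; lia.
have hpr := hprim; rewrite /primitive_walk in hpr.
apply: (hpr (take g es) (n %/ g) hm); apply: hpow => i hi.
have := hfg i; rewrite /f !modn_small //; lia.
Qed.

Lemma inj k k' : k < size es -> k' < size es -> vt v0 QQ k.+1 = v -> vt v0 QQ k'.+1 = v ->
  phi k = phi k' -> k = k'.
Proof.
move=> hk hk' hv hv' hp.
case: (ltngtP k k') => // h; exfalso.
  exact: (inj_aux h hk' hv hv' hp).
exact: (inj_aux h hk hv' hv (esym hp)).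
Qed.





End Main.

Unset Implicit Arguments.
Theorem theorem1 (Sigma : finType) (G : lgraph Sigma) :
  assembly_graph G -> non_redundant G ->
  forall (v0 : vertex G) (es : seq (edge G)), circuit v0 es ->
  forall v : vertex G,
    vertex_occurrences v es = cyc_occurrences (vlabel v) (circuit_word v0 es).
Proof.
move=> [habs _ _ hps] hnr v0 es [hcw hn hprim] v.
have hw : is_walk v0 es by case/andP: hcw.
have hcwd : circuit_word v0 es = xx es.
  by rewrite /circuit_word (walk_labelE habs hw) /WL drop_size_cat.
rewrite /vertex_occurrences /cyc_occurrences hcwd.
have [e0 _] : exists e : edge G, e \in es by case: (es) hn => [|e r] // _; exists e; rewrite inE eqxx.
rewrite (count_iota e0).
have hnth : forall k, k < size es -> nth e0 (QQ v0 es v) k = nth e0 es k.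
  move=> k hk; rewrite /QQ /Qr; case: (KK v0 v) (hK v0 v) => [|K'] //= _.
  by rewrite nth_cat hk.
have hsQ : size es <= size (QQ v0 es v).
  rewrite /QQ /Qr size_rep; apply: leq_pmull; exact: hK.
rewrite (@eq_in_count _ _ (fun k => vt v0 (QQ v0 es v) k.+1 == v)); last first.
  move=> k; rewrite mem_iota add0n leq0n /= => hk.
  by rewrite (vt_succ _ e0); [rewrite hnth | apply: leq_trans hsQ].
apply: (count_bij (phi := phi v0 es v)).
- move=> k k' hk hk' /eqP hv /eqP hv'; exact: (inj habs hps hnr hcw hn hprim hk hk' hv hv').
- move=> k hk /eqP hv; exact: (fw habs hps hcw hn hk hv).
- move=> s hs ho; have [k [hk hv hp]] := bw habs hps hnr hcw hn hs ho.
  by exists k; rewrite hv eqxx.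
Qed.
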